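(* Let $n,m$ be integers with $n-|m|$ even and non-negative, and define the radial Zernike polynomial $R_n^{|m|}(r)=r^{|m|}\,P^{(0,|m|)}_{\frac{n-|m|}{2}}(2r^2-1)$ for $0\le r\le 1$. Then for every integer $k\ge 0$, \[ \max_{0\le r\le 1}\bigl|(R_n^{|m|})^{(k)}(r)\bigr|\;\le\;\frac{n^2(n^2-1^2)\cdots(n^2-(k-1)^2)}{2^k\,(1/2)_k}, \] where the right-hand side is interpreted as $1$ when $k=0$.
   Context: $P_p^{(\alpha,\beta)}$ denotes the Jacobi polynomial of degree $p$ orthogonal with respect to the weight $(1-x)^\alpha(1+x)^\beta$ on $[-1,1]$, with the standard normalization $P_p^{(\alpha,\beta)}(1)=\binom{p+\alpha}{p}$. $f^{(k)}$ denotes the $k$-th derivative of $f$. $(\alpha)_0=1$ and $(\alpha)_k=\alpha(\alpha+1)\cdots(\alpha+k-1)$ for $k\ge1$ (Pochhammer symbol). *)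

(* Defs.v *)
From mathcomp Require Import all_boot all_order all_algebra.
Set Implicit Arguments. Unset Strict Implicit. Unset Printing Implicit Defensive.
Import Order.TTheory GRing.Theory Num.Theory.
Local Open Scope ring_scope.

(* It satisfies P_p^{(a,b)}(1) = C(p+a, p). *)
Definition jacobi (R : fieldType) (a b p : nat) : {poly R} :=
  \sum_(s < p.+1)
     (('C(p + a, p - s) * 'C(p + b, s))%:R / 2 ^+ p)
       *: (('X - 1) ^+ s * ('X + 1) ^+ (p - s)).

Definition zernikeR (R : fieldType) (n m : int) : {poly R} :=
  'X ^+ absz m *
  (jacobi R 0 (absz m) ((absz (n - `|m|)) %/ 2) \Po (2%:P * 'X ^+ 2 - 1)).

Definition pochhammer (R : ringType) (x : R) (k : nat) : R :=
  \prod_(i < k) (x + i%:R).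

(* Main.v *)
Require Import Defs.
From mathcomp Require Import all_boot all_order all_algebra.
From mathcomp Require Import polyXY.
From mathcomp Require Import ring lra zify.
Set Implicit Arguments. Unset Strict Implicit. Unset Printing Implicit Defensive.
Import Order.TTheory GRing.Theory Num.Theory.
Local Open Scope ring_scope.

Section Cheb.
Variable R : realFieldType.
Implicit Types P Q : {poly R}.

Fixpoint TU (n : nat) : {poly R} * {poly R} :=
  match n with
  | 0 => (1, 0)
  | n'.+1 => ('X * (TU n').1 + ('X ^+ 2 - 1) * (TU n').2, (TU n').1 + 'X * (TU n').2)
  end.
Definition Tc n := (TU n).1.
Definition Uc n := (TU n).2.

Lemma T0 : Tc 0 = 1. Proof. by []. Qed.
Lemma U0 : Uc 0 = 0. Proof. by []. Qed.
Lemma TS n : Tc n.+1 = 'X * Tc n + ('X ^+ 2 - 1) * Uc n. Proof. by []. Qed.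
Lemma US n : Uc n.+1 = Tc n + 'X * Uc n. Proof. by []. Qed.

Lemma T2 n : Tc n.+2 = 'X * Tc n.+1 *+ 2 - Tc n.
Proof. rewrite /Tc /Uc /=; ring. Qed.
Lemma U2 n : Uc n.+2 = 'X * Uc n.+1 *+ 2 - Uc n.
Proof. rewrite /Tc /Uc /=; ring. Qed.
Lemma U2T n : Uc n.+2 = Uc n + Tc n.+1 *+ 2.
Proof. rewrite /Tc /Uc /=; ring. Qed.

Arguments Tc : simpl never.
Arguments Uc : simpl never.

Lemma Tderiv n : (Tc n)^`() = Uc n *+ n.
Proof.
elim/ltn_ind: n => -[|[|n]] IH.
- by rewrite T0 derivC.
- by rewrite TS T0 U0 mulr0 addr0 mulr1 derivX US T0 U0 mulr0 addr0.
- rewrite T2 derivB derivMn derivM derivX mul1r IH // IH //.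
  rewrite U2 !TS !US.
  ring.
Qed.

Lemma Uderiv n : ('X ^+ 2 - 1) * (Uc n)^`() = Tc n *+ n - 'X * Uc n.
Proof.
elim: n => [|n IH]; first by rewrite U0 deriv0 mulr0 T0 mulr0 subr0.
rewrite US derivD derivM derivX mul1r Tderiv.
set u' := (Uc n)^`().
have -> : ('X ^+ 2 - 1) * (Uc n *+ n + (Uc n + 'X * u')) =
   ('X ^+ 2 - 1) * (Uc n *+ n.+1) + 'X * (('X ^+ 2 - 1) * u') by ring.
rewrite IH TS; ring.
Qed.

Lemma ode_gen (f : {poly R}) (n : nat) :
  ('X ^+ 2 - 1) * f^`(2) + 'X * f^`(1) = f *+ (n * n) ->
  forall k, ('X ^+ 2 - 1) * f^`(k.+2) + 'X * f^`(k.+1) *+ (k.*2.+1) + f^`(k) *+ (k * k)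
     = f^`(k) *+ (n * n).
Proof.
move=> H0; elim=> [|k IH]; first by rewrite mulr1n mulr0n addr0.
have := congr1 (@deriv R) IH.
rewrite !derivD !derivMn !derivM derivB derivX derivC subr0 mul1r -!derivnS.
move=> <-.
rewrite derivXn /=.
have -> : (k.+1 * k.+1 = k * k + k.*2.+1)%N by rewrite -addnn; lia.
have -> : (k.+1.*2.+1 = k.*2.+1 + 2)%N by rewrite -!addnn; lia.
rewrite expr2; ring.
Qed.

Lemma Tode n k : ('X ^+ 2 - 1) * (Tc n)^`(k.+2) + 'X * (Tc n)^`(k.+1) *+ (k.*2.+1)
   + (Tc n)^`(k) *+ (k * k) = (Tc n)^`(k) *+ (n * n).
Proof.
apply: ode_gen.
rewrite derivSn !derivn1 Tderiv derivMn mulrnAr Uderiv; ring.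
Qed.

Lemma T_at1 n : (Tc n).[1] = 1.
Proof. by elim: n => [|n IH]; rewrite ?T0 ?hornerC // TS !hornerE IH; ring. Qed.

Lemma pell n : Tc n ^+ 2 - ('X ^+ 2 - 1) * Uc n ^+ 2 = 1.
Proof.
elim: n => [|n IH]; first by rewrite T0 U0; ring.
rewrite TS US -[RHS]IH; ring.
Qed.

Lemma T_bound n (x : R) : -1 <= x <= 1 -> `|(Tc n).[x]| <= 1.
Proof.
move=> /andP[h1 h2].
have := congr1 (fun p : {poly R} => p.[x]) (pell n).
rewrite !hornerE /= => H.
set t := (Tc n).[x] in H *; set u := (Uc n).[x] in H.
have hu : 0 <= (1 - x ^+ 2) * u ^+ 2 by apply: mulr_ge0; [nra | exact: sqr_ge0].
have ht : t ^+ 2 <= 1 by nra.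
rewrite ler_norml; apply/andP; split; nra.
Qed.


Definition Dk (n k : nat) : R :=
  (\prod_(i < k) ((n * n)%:R - (i * i)%:R)) / \prod_(i < k) (i.*2.+1)%:R.

Lemma Tderiv_at1 n k : ((Tc n)^`(k)).[1] = Dk n k.
Proof.
elim: k => [|k IH]; first by rewrite derivn0 T_at1 /Dk !big_ord0 divr1.
have := congr1 (fun p : {poly R} => p.[1]) (Tode n k).
rewrite !hornerE !hornerMn !hornerE expr1n subrr mul0r add0r IH => H.
have hk : (k.*2.+1)%:R != 0 :> R by rewrite pnatr_eq0.
have -> : ((Tc n)^`(k.+1)).[1] = Dk n k * ((n * n)%:R - (k * k)%:R) / (k.*2.+1)%:R.
  apply: (mulIf hk); rewrite mulfVK // mulrBr !mulr_natr -H; ring.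
rewrite /Dk !big_ord_recr /= invfM; ring.
Qed.

Inductive Tpos : {poly R} -> Prop :=
| Tp0 : Tpos 0
| TpT j : Tpos (Tc j)
| TpD P Q : Tpos P -> Tpos Q -> Tpos (P + Q)
| TpZ (c : R) P : 0 <= c -> Tpos P -> Tpos (c *: P).

Lemma TpMn P j : Tpos P -> Tpos (P *+ j).
Proof. by move=> h; rewrite -scaler_nat; apply: TpZ. Qed.

Lemma Upos j : Tpos (Uc j).
Proof.
elim/ltn_ind: j => -[|[|j]] IH; first exact: Tp0.
  by rewrite US U0 mulr0 addr0; apply: TpT.
by rewrite U2T; apply: TpD; [apply: IH | apply: TpMn; apply: TpT].
Qed.

Lemma Tpos_deriv P : Tpos P -> Tpos P^`().
Proof.
elim=> [|j|P1 Q1 _ h1 _ h2|c P1 hc _ h].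
- by rewrite deriv0; apply: Tp0.
- by rewrite Tderiv; apply: TpMn; apply: Upos.
- by rewrite derivD; apply: TpD.
- by rewrite derivZ; apply: TpZ.
Qed.

Lemma Tpos_derivn P k : Tpos P -> Tpos P^`(k).
Proof.
move=> h; elim: k => [|k IH]; first by rewrite derivn0.
by rewrite derivnS; apply: Tpos_deriv.
Qed.

Lemma Tpos_bound P (x : R) : -1 <= x <= 1 -> Tpos P -> `|P.[x]| <= P.[1].
Proof.
move=> hx; elim=> [|j|P1 Q1 _ h1 _ h2|c P1 hc _ h].
- by rewrite !hornerE normr0.
- by rewrite T_at1; apply: T_bound.
- rewrite !hornerE; apply: le_trans (ler_normD _ _) _; exact: lerD.
- rewrite !hornerE normrM ger0_norm //; exact: ler_wpM2l.
Qed.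

Lemma Tderiv_bound j k (x : R) : -1 <= x <= 1 -> `|((Tc j)^`(k)).[x]| <= Dk j k.
Proof.
move=> hx; rewrite -Tderiv_at1; apply: Tpos_bound => //.
apply: Tpos_derivn; apply: TpT.
Qed.

Lemma Dk_ge0 j k : 0 <= Dk j k.
Proof.
rewrite /Dk; apply: divr_ge0; last by apply: prodr_ge0 => i _; rewrite ler0n.
case: (ltnP j k) => hjk.
  by rewrite (bigD1 (Ordinal hjk)) //= subrr mul0r.
apply: prodr_ge0 => i _; rewrite subr_ge0 ler_nat leq_mul //; apply: ltnW;
  exact: leq_trans (ltn_ord i) hjk.
Qed.

Lemma Dk_mono j N k : (j <= N)%N -> Dk j k <= Dk N k.
Proof.
move=> hjN; rewrite /Dk ler_pM2r; last first.
  by rewrite invr_gt0; apply: prodr_gt0 => i _; rewrite ltr0n.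
case: (ltnP j k) => hjk.
  rewrite (bigD1 (Ordinal hjk)) //= subrr mul0r.
  have := Dk_ge0 N k; rewrite /Dk pmulr_lge0 //.
  by rewrite invr_gt0; apply: prodr_gt0 => i _; rewrite ltr0n.
apply: ler_prod => i _; apply/andP; split.
  by rewrite subr_ge0 ler_nat leq_mul //; apply: ltnW; exact: leq_trans (ltn_ord i) hjk.
by apply: lerB => //; rewrite ler_nat leq_mul.
Qed.

End Cheb.

Section Phi.
Variable R : realFieldType.
Implicit Types P Q : {poly R}.

Definition Tz (z : int) : {poly R} := Tc R (absz z).

Lemma Tz_rec z : Tz (z + 1) + Tz (z - 1) = 'X * Tz z *+ 2.
Proof.
rewrite /Tz; case: z => [[|n]|n].
- by rewrite /= TS T0 U0; ring.
- have -> : absz (n.+1%:Z + 1) = n.+2 by lia.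
  have -> : absz (n.+1%:Z - 1) = n by lia.
  by rewrite T2 /=; ring.
- have -> : absz (Negz n + 1) = n by lia.
  have -> : absz (Negz n - 1) = n.+2 by lia.
  by rewrite T2 /=; ring.
Qed.

Lemma Tz_rec2 z : Tz (z + 2) + Tz (z - 2) = ('X ^+ 2 *+ 4 - 2%:R) * Tz z.
Proof.
have h1 := Tz_rec (z + 1); have h2 := Tz_rec (z - 1); have h3 := Tz_rec z.
have e1 : z + 1 + 1 = z + 2 by ring.
have e2 : z + 1 - 1 = z by ring.
have e3 : z - 1 + 1 = z by ring.
have e4 : z - 1 - 1 = z - 2 by ring.
rewrite e1 e2 in h1; rewrite e3 e4 in h2.
have -> : Tz (z + 2) = 'X * Tz (z + 1) *+ 2 - Tz z by rewrite -h1; ring.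
have -> : Tz (z - 2) = 'X * Tz (z - 1) *+ 2 - Tz z by rewrite -h2; ring.
have -> : 'X * Tz (z + 1) *+ 2 - Tz z + ('X * Tz (z - 1) *+ 2 - Tz z)
   = 'X * (Tz (z + 1) + Tz (z - 1)) *+ 2 - Tz z *+ 2 by ring.
rewrite h3; ring.
Qed.

Definition Phi (N : nat) P : {poly R} :=
  \sum_(i < size P) P`_i *: Tz (i.*2%:Z - N%:Z).

Lemma PhiE N P B : (size P <= B)%N ->
  Phi N P = \sum_(i < B) P`_i *: Tz (i.*2%:Z - N%:Z).
Proof.
move=> hB; rewrite /Phi (big_ord_widen B (fun i : nat => P`_i *: Tz (i.*2%:Z - N%:Z)) hB) big_mkcond; apply: eq_bigr => i _.
by case: ifP => // h; rewrite nth_default ?scale0r // leqNgt h.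
Qed.

Lemma Phi0 N : Phi N 0 = 0.
Proof. by rewrite /Phi size_poly0 big_ord0. Qed.

Lemma PhiD N P Q : Phi N (P + Q) = Phi N P + Phi N Q.
Proof.
set B := maxn (size P) (size Q).
rewrite (@PhiE N (P + Q) B) ?(@PhiE N P B) ?(@PhiE N Q B) ?leq_maxl ?leq_maxr //.
  by rewrite -big_split; apply: eq_bigr => i _; rewrite coefD scalerDl.
exact: size_add.
Qed.

Lemma PhiZ N c P : Phi N (c *: P) = c *: Phi N P.
Proof.
rewrite (@PhiE N _ (size P)) ?size_scale_leq // /Phi scaler_sumr.
by apply: eq_bigr => i _; rewrite coefZ scalerA.
Qed.

Lemma Phi_sum N (I : Type) (r : seq I) (F : I -> {poly R}) :
  Phi N (\sum_(i <- r) F i) = \sum_(i <- r) Phi N (F i).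
Proof.
elim: r => [|x r IH]; first by rewrite !big_nil Phi0.
by rewrite !big_cons PhiD IH.
Qed.

Lemma PhiXn N i : Phi N 'X^i = Tz (i.*2%:Z - N%:Z).
Proof.
rewrite /Phi size_polyXn big_ord_recr /= big1 ?add0r; last first.
  by move=> j _; rewrite coefXn (ltn_eqF (ltn_ord j)) scale0r.
by rewrite coefXn eqxx scale1r.
Qed.

Lemma polyE' P : P = \sum_(i < size P) P`_i *: 'X^i.
Proof. by rewrite -{1}[P]coefK poly_def. Qed.

Lemma Phi_lin N P (G : {poly R} -> {poly R}) (H : {poly R} -> {poly R}) :
  (forall c Q, G (c *: Q) = c *: G Q) -> (forall Q1 Q2, G (Q1 + Q2) = G Q1 + G Q2) ->
  (forall Q, H Q = Q) ->
  (forall i, Phi N.+1 (G 'X^i) = H (Phi N 'X^i)) -> True.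
Proof. by []. Qed.

Lemma Phi_mul1 N P : Phi N.+1 (('X + 1) * P) = 'X * Phi N P *+ 2.
Proof.
rewrite [in LHS](polyE' P) [in RHS](polyE' P) mulr_sumr Phi_sum Phi_sum.
rewrite mulr_sumr -sumrMnl; apply: eq_bigr => i _.
rewrite -scalerAr !PhiZ mulrDl -exprS mul1r PhiD !PhiXn -scalerAr scalerMnr; congr (_ *: _).
have -> : i.+1.*2%:Z - N.+1%:Z = (i.*2%:Z - N%:Z) + 1 by lia.
have -> : i.*2%:Z - N.+1%:Z = (i.*2%:Z - N%:Z) - 1 by lia.
exact: Tz_rec.
Qed.

Lemma Phi_mul2 N P : Phi N.+2 (('X - 1) ^+ 2 * P) = ('X ^+ 2 - 1) * Phi N P *+ 4.
Proof.
rewrite [in LHS](polyE' P) [in RHS](polyE' P) mulr_sumr Phi_sum Phi_sum.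
rewrite mulr_sumr -sumrMnl; apply: eq_bigr => i _.
rewrite -scalerAr !PhiZ -scalerAr scalerMnr; congr (_ *: _).
have -> : ('X - 1) ^+ 2 * 'X^i = 'X^(i.+2) - 'X^(i.+1) *+ 2 + 'X^i :> {poly R}.
  by rewrite !exprS; ring.
rewrite PhiD (_ : forall Q1 Q2, Phi N.+2 (Q1 - Q2) = Phi N.+2 Q1 - Phi N.+2 Q2); last first.
  by move=> Q1 Q2; rewrite PhiD -scaleN1r PhiZ scaleN1r.
rewrite (_ : Phi N.+2 ('X^(i.+1) *+ 2) = Phi N.+2 ('X^(i.+1)) *+ 2); last by rewrite -!scaler_nat PhiZ.
rewrite !PhiXn.
have -> : i.+2.*2%:Z - N.+2%:Z = (i.*2%:Z - N%:Z) + 2 by lia.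
have -> : i.+1.*2%:Z - N.+2%:Z = (i.*2%:Z - N%:Z) by lia.
have -> : i.*2%:Z - N.+2%:Z = (i.*2%:Z - N%:Z) - 2 by lia.
set z := (i.*2%:Z - N%:Z).
have h := Tz_rec2 z.
have -> : Tz (z + 2) - Tz z *+ 2 + Tz (z - 2) = (Tz (z + 2) + Tz (z - 2)) - Tz z *+ 2 by ring.
rewrite h; ring.
Qed.

Lemma Phi_pow a b : Phi (a + b.*2) (('X + 1) ^+ a * ('X - 1) ^+ b.*2)
   = ('X *+ 2) ^+ a * (('X ^+ 2 - 1) *+ 4) ^+ b.
Proof.
elim: a => [|a IH].
  rewrite !expr0 !mul1r add0n.
  elim: b => [|b IHb].
    by have := PhiXn 0 0; rewrite !expr0 /Tz /= T0 => ->.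
  rewrite doubleS exprS exprS mulrA -expr2 Phi_mul2 IHb [in RHS]exprS; ring.
rewrite addSn exprS -mulrA Phi_mul1 IH [in RHS]exprS; ring.
Qed.

End Phi.

Lemma coef_lin (S : comNzRingType) (al be : S) k i :
  ((al%:P + 'X * be%:P) ^+ k)`_i = al ^+ (k - i) * be ^+ i *+ 'C(k, i).
Proof.
elim: k i => [|k IH] i.
  rewrite expr0 coef1; case: i => [|i]; first by rewrite !expr0 mulr1.
  by rewrite /= bin0n mulr0n.
rewrite exprSr mulrDr mulrA coefD !coefMC coefMX.
case: i => [|i].
  by rewrite mul0r addr0 IH !subn0 !expr0 !bin0 !mulr1n !mulr1 -exprSr.
rewrite /= !IH binS mulrnDr.
case: (ltnP i k) => hik.
  rewrite subSS; congr (_ + _).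
    by rewrite mulrnAl mulrAC -exprSr subnSK.
  by rewrite mulrnAl -mulrA -exprSr.
rewrite (@bin_small k i.+1) ?ltnS //.
rewrite subSS [be ^+ i.+1]exprSr; ring.
Qed.

Lemma tri n p q a j : n = (p + q)%N -> (j <= a)%N -> (j <= p)%N ->
  ('C(n, p) * ('C(q, a - j) * 'C(p, j)) = 'C(n, a) * ('C(a, j) * 'C(n - a, p - j)))%N.
Proof.
move=> hn hja hjp.
case: (ltnP n a) => hna.
  rewrite (bin_small hna) mul0n (@bin_small q (a - j)) ?mul0n ?muln0 //; lia.
case: (ltnP q (a - j)) => hq.
  rewrite (bin_small hq) (@bin_small (n - a) (p - j)) ?mul0n ?muln0 //; lia.
set K := (j`! * (p - j)`! * ((a - j)`! * (q - (a - j))`!))%N.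
have hK : (0 < K)%N by rewrite !muln_gt0 !fact_gt0.
apply/eqP; rewrite -(eqn_pmul2r hK); apply/eqP.
have f1 := bin_fact hjp.
have f2 := bin_fact hq.
have f3 := bin_fact hja.
have hpa : (p - j <= n - a)%N by lia.
have f4 := bin_fact hpa.
have f5 := bin_fact hna.
have hp : (p <= n)%N by lia.
have f6 := bin_fact hp.
have e1 : (n - a - (p - j) = q - (a - j))%N by lia.
have e2 : (n - p = q)%N by lia.
rewrite e1 in f4; rewrite e2 in f6.
transitivity (n`!).
  rewrite -f6 -f1 -f2 /K; ring.
rewrite -f5 -f3 -f4 /K; ring.
Qed.

Section Biv.
Variable R : realFieldType.

Definition Lt (p q : nat) : {poly R} :=
  \sum_(s < p.+1) ('C(q, s) * 'C(p, s))%:R *: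
     (('X + 1) ^+ (p + q - s.*2) * ('X - 1) ^+ s.*2).

Definition ca (p q a : nat) : R :=
  \sum_(i < a.+1) ('C(q, i) * 'C(p, a - i))%:R * (-1) ^+ (p - (a - i)).
Definition da (p q a : nat) : R :=
  \sum_(j < p.+1) ('C(a, j) * 'C(p + q - a, p - j))%:R * (-1) ^+ (p - j).

Let x : {poly R} := 'X.
Let A : {poly {poly R}} := (x + 1)%:P + 'X * (x - 1)%:P.
Let B : {poly {poly R}} := (x - 1)%:P + 'X * (x + 1)%:P.

Lemma step1 p q : (A ^+ q * B ^+ p)`_p = Lt p q.
Proof.
rewrite coefM /Lt; apply: eq_bigr => [[j hj]] _ /=.
rewrite !coef_lin subKn // bin_sub //.
case: (ltnP q j) => hqj.
  by rewrite (bin_small hqj) mul0n scale0r mulr0n mul0r.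
rewrite (_ : (p + q - j.*2 = (q - j) + (p - j))%N); last by rewrite -addnn; lia.
rewrite -addnn !exprD -mul_polyC rmorph_nat natrM; ring.
Qed.


Let A' : {poly {poly R}} := (1 - x)%:P + 'X * (1 + x)%:P.
Let B' : {poly {poly R}} := (x - 1)%:P + 'X * (1 + x)%:P.

Lemma swapA : swapXY A = A'.
Proof.
rewrite /A /A' rmorphD rmorphM /= !swapXY_polyC swapXY_X /x.
rewrite rmorphD rmorphB /= map_polyX rmorph1.
rewrite !rmorphB !rmorphD /= !polyC1; ring.
Qed.

Lemma swapB : swapXY B = B'.
Proof.
rewrite /B /B' rmorphD rmorphM /= !swapXY_polyC swapXY_X /x.
rewrite !(rmorphB, rmorphD) /= ?map_polyX ?rmorph1 ?polyC1 /=.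
ring.
Qed.

Lemma step2 p q : swapXY (A ^+ q * B ^+ p) = A' ^+ q * B' ^+ p.
Proof. by rewrite rmorphM !rmorphXn /= swapA swapB. Qed.

Lemma step3 p q a : (A' ^+ q * B' ^+ p)`_a
   = (ca p q a)%:P * ((1 + x) ^+ a * (1 - x) ^+ (p + q - a)).
Proof.
rewrite coefM /ca rmorph_sum mulr_suml; apply: eq_bigr => [[i hi]] _ /=.
rewrite !coef_lin.
case: (ltnP q i) => hqi.
  by rewrite (bin_small hqi) mul0n mulr0n mul0r mul0r polyC0 mul0r.
case: (ltnP p (a - i)) => hpi.
  by rewrite (bin_small hpi) muln0 mulr0n mulr0 mul0r polyC0 mul0r.
have e1 : (p + q - a = (q - i) + (p - (a - i)))%N by lia.
have e3 : (1 + x) ^+ a = (1 + x) ^+ i * (1 + x) ^+ (a - i).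
  by rewrite -exprD subnKC.
rewrite e1 e3 exprD (_ : x - 1 = - (1 - x)); last by ring.
rewrite [(- (1 - x)) ^+ _]exprNn rmorphM /= rmorph_nat rmorphXn /= rmorphN rmorph1; ring.
Qed.

Lemma step4 p q a : ((1 + x) ^+ a * (1 - x) ^+ (p + q - a))`_p = da p q a.
Proof.
rewrite coefM /da; apply: eq_bigr => [[j hj]] _ /=.
rewrite (_ : 1 + x = 1%:P + 'X * 1%:P); last by rewrite polyC1 mulr1 /x.
rewrite (_ : 1 - x = 1%:P + 'X * (-1)%:P); last by rewrite polyC1 polyCN mulrN1 /x.
rewrite !coef_lin !expr1n !mul1r natrM; ring.
Qed.

Lemma Lt_coef p q a : (Lt p q)`_a = ca p q a * da p q a.
Proof.
by rewrite -step1 -coef_swapXY step2 step3 coefCM step4.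
Qed.

Lemma ca_rev p q a : ca p q a =
  \sum_(j < a.+1) ('C(q, a - j) * 'C(p, j))%:R * (-1) ^+ (p - j).
Proof.
rewrite /ca (reindex_inj rev_ord_inj) /=; apply: eq_bigr => [[j hj]] _ /=.
by rewrite subSS subKn // -ltnS.
Qed.

Lemma widen_sum (f : nat -> R) n M : (n <= M)%N ->
  \sum_(j < n) f j = \sum_(j < M) (if (j < n)%N then f j else 0).
Proof.
by move=> h; rewrite (big_ord_widen M f h) big_mkcond.
Qed.

Lemma dual p q a : ('C(p + q, p))%:R * ca p q a = ('C(p + q, a))%:R * da p q a.
Proof.
rewrite ca_rev /da (@widen_sum (fun j => ('C(q, a - j) * 'C(p, j))%:R * (-1) ^+ (p - j)) a.+1 (a + p).+1) ?ltnS ?leq_addr //.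
rewrite (@widen_sum (fun j => ('C(a, j) * 'C(p + q - a, p - j))%:R * (-1) ^+ (p - j)) p.+1 (a + p).+1) ?ltnS ?leq_addl //.
rewrite !mulr_sumr; apply: eq_bigr => [[j hj]] _ /=.
rewrite !ltnS.
case: (leqP j a) => hja; case: (leqP j p) => hjp.
- by rewrite !mulrA -!natrM (tri (erefl (p + q)%N) hja hjp).
- by rewrite (bin_small hjp) muln0 mul0r !mulr0.
- by rewrite (bin_small hja) mul0n mul0r !mulr0.
- by rewrite !mulr0.
Qed.

Lemma Lt_coef_ge0 p q a : 0 <= (Lt p q)`_a.
Proof.
rewrite Lt_coef.
have hp : (0 < 'C(p + q, p))%N by rewrite bin_gt0 leq_addr.
have h := dual p q a.
have hpos : (0 : R) < ('C(p + q, p))%:R by rewrite ltr0n.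
rewrite -(pmulr_rge0 _ hpos) mulrA h -mulrA -expr2.
by apply: mulr_ge0; [rewrite ler0n | exact: sqr_ge0].
Qed.

Lemma Lt_coef_big p q a : (p + q < a)%N -> (Lt p q)`_a = 0.
Proof.
move=> ha; rewrite Lt_coef.
have h := dual p q a; rewrite (bin_small ha) mul0r in h.
have hpos : ('C(p + q, p))%:R != 0 :> R by rewrite pnatr_eq0 -lt0n bin_gt0 leq_addr.
move/eqP: h; rewrite mulf_eq0 (negbTE hpos) /= => /eqP ->.
by rewrite mul0r.
Qed.

End Biv.

Section Zern.
Variable R : realFieldType.

Lemma comp_sum (I : Type) (r : seq I) (F : I -> {poly R}) (Q : {poly R}) :
  (\sum_(i <- r) F i) \Po Q = \sum_(i <- r) (F i \Po Q).
Proof.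
elim: r => [|x r IH]; first by rewrite !big_nil comp_poly0.
by rewrite !big_cons comp_polyD IH.
Qed.

Lemma comp_exp (P Q : {poly R}) k : (P ^+ k) \Po Q = (P \Po Q) ^+ k.
Proof.
elim: k => [|k IH]; first by rewrite !expr0 comp_polyC.
by rewrite !exprS comp_polyM IH.
Qed.

Let Q : {poly R} := 2%:P * 'X ^+ 2 - 1.

Lemma jacobi_comp M p : jacobi R 0 M p \Po Q =
  \sum_(s < p.+1) ('C(p, s) * 'C(p + M, s))%:R *: (('X ^+ 2 - 1) ^+ s * ('X ^+ 2) ^+ (p - s)).
Proof.
rewrite /jacobi comp_sum; apply: eq_bigr => [[s hs]] _ /=.
rewrite comp_polyZ comp_polyM !comp_exp.
have e1 : ('X - 1) \Po Q = ('X ^+ 2 - 1) *+ 2.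
  by rewrite comp_polyB comp_polyX comp_polyC /Q polyC_natr; ring.
have e2 : ('X + 1) \Po Q = ('X ^+ 2) *+ 2.
  by rewrite comp_polyD comp_polyX comp_polyC /Q polyC_natr; ring.
have e3 : (('X ^+ 2 - 1) *+ 2) ^+ s * ('X ^+ 2 *+ 2) ^+ (p - s)
    = (('X ^+ 2 - 1) ^+ s * ('X ^+ 2) ^+ (p - s)) *+ 2 ^ p :> {poly R}.
  have h1 : (('X ^+ 2 - 1) *+ 2) ^+ s = ('X ^+ 2 - 1) ^+ s *+ 2 ^ s :> {poly R} := exprMn_n _ _ _.
  have h2 : ('X ^+ 2 *+ 2) ^+ (p - s) = ('X ^+ 2) ^+ (p - s) *+ 2 ^ (p - s) :> {poly R} := exprMn_n _ _ _.
  have h3 : (2 ^ p = 2 ^ (p - s) * 2 ^ s)%N by rewrite -expnD subnK // -ltnS.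
  rewrite h1 h2 h3; ring.
rewrite e1 e2 e3.
set P := (('X ^+ 2 - 1) ^+ s * ('X ^+ 2) ^+ (p - s)).
have h4 : P *+ 2 ^ p = ((2 : R) ^+ p) *: P by rewrite -scaler_nat natrX.
have h5 : (2 : R) ^+ p != 0 by rewrite expf_neq0 // pnatr_eq0.
rewrite h4 scalerA mulfVK // addn0.
by rewrite bin_sub // -ltnS.
Qed.

Lemma Phi_Lt N M p : N = (M + p.*2)%N ->
  Phi N (Lt R p (p + M)) = ('X ^+ M * (jacobi R 0 M p \Po Q)) *+ 2 ^ N.
Proof.
move=> hN; rewrite jacobi_comp /Lt Phi_sum mulr_sumr -sumrMnl; apply: eq_bigr => [[s hs]] _ /=.
rewrite PhiZ.
have hsp : (s <= p)%N by rewrite -ltnS.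
set a := (p + (p + M) - s.*2)%N.
have e : N = (a + s.*2)%N by move: hN hsp; rewrite /a -!addnn; lia.
rewrite {1}e Phi_pow.
have h1 : ('X *+ 2) ^+ a = 'X ^+ a *+ 2 ^ a :> {poly R} := exprMn_n _ _ _.
have h2 : (('X ^+ 2 - 1) *+ 4) ^+ s = ('X ^+ 2 - 1) ^+ s *+ 4 ^ s :> {poly R} := exprMn_n _ _ _.
have h3 : (2 ^ N = 2 ^ a * 4 ^ s)%N by rewrite e expnD -mul2n expnM.
have h4 : 'X ^+ a = 'X ^+ M * ('X ^+ 2) ^+ (p - s) :> {poly R}.
  by rewrite -exprM -exprD; congr (_ ^+ _); move: hN hsp; rewrite /a -!addnn; lia.
rewrite h1 h2 h3 h4 -scalerAr scalerMnr; congr (_ *: _); first by rewrite mulnC.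
ring.
Qed.


Lemma Lt_size p q : (size (Lt R p q) <= (p + q).+1)%N.
Proof. by apply/leq_sizeP => j hj; apply: Lt_coef_big. Qed.

Lemma Lt_sum p q : \sum_(a < (p + q).+1) (Lt R p q)`_a = 2 ^+ (p + q).
Proof.
have := horner_coef_wide 1 (Lt_size p q).
under eq_bigr do rewrite expr1n mulr1.
move=> <-.
rewrite /Lt horner_sum big_ord_recl big1 ?addr0.
  by rewrite !bin0 muln1 subn0 mulr1 scale1r !hornerE.
move=> i _.
have h0 : ('X - 1 : {poly R}).[1] = 0 by rewrite hornerD hornerN hornerX hornerC subrr.
by rewrite hornerZ hornerM [(('X - 1) ^+ _).[1]]horner_exp h0 expr0n /= mulr0 mulr0.
Qed.

Lemma derivn_sum (I : Type) (r : seq I) (F : I -> {poly R}) k :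
  (\sum_(i <- r) F i)^`(k) = \sum_(i <- r) (F i)^`(k).
Proof.
elim: r => [|x r IH]; first by rewrite !big_nil; elim: k => [|k IH] //; rewrite derivnS IH deriv0.
by rewrite !big_cons derivnD IH.
Qed.

Lemma bound_main N M p k (r : R) : N = (M + p.*2)%N -> -1 <= r <= 1 ->
  `|(('X ^+ M * (jacobi R 0 M p \Po Q))^`(k)).[r]| <= Dk R N k.
Proof.
move=> hN hr.
have hNpq : (p + (p + M))%N = N by rewrite hN -addnn; lia.
have h2 : (2 : R) ^+ N != 0 by rewrite expf_neq0 // pnatr_eq0.
have hZ : 'X ^+ M * (jacobi R 0 M p \Po Q) = ((2 : R) ^+ N)^-1 *: Phi N (Lt R p (p + M)).
  rewrite Phi_Lt // -scaler_nat natrX scalerA mulVf // scale1r //.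
rewrite hZ (@PhiE _ N _ N.+1); last by rewrite -hNpq Lt_size.
rewrite derivnZ derivn_sum hornerZ horner_sum normrM.
under eq_bigr do rewrite derivnZ hornerZ.
have hpos : 0 < ((2 : R) ^+ N)^-1 by rewrite invr_gt0 exprn_gt0.
rewrite gtr0_norm //.
apply: le_trans (ler_wpM2l (ltW hpos) (ler_norm_sum _ _ _)) _.
apply: le_trans (ler_wpM2l (ltW hpos) (_ : _ <= \sum_(a < N.+1) (Lt R p (p + M))`_a * Dk R N k)) _.
  apply: ler_sum => a _; rewrite normrM ger0_norm ?Lt_coef_ge0 //.
  apply: ler_wpM2l; first exact: Lt_coef_ge0.
  apply: le_trans (Tderiv_bound _ _ hr) _.
  apply: Dk_mono; have := ltn_ord a; lia.
have hs := Lt_sum p (p + M); rewrite hNpq in hs.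
by rewrite -mulr_suml hs mulrA mulVf // mul1r.
Qed.

End Zern.

Lemma denom_eq (R : realFieldType) k :
  2 ^+ k * pochhammer (2^-1 : R) k = \prod_(i < k) (i.*2.+1)%:R.
Proof.
rewrite /pochhammer; elim: k => [|k IH]; first by rewrite !big_ord0 mulr1.
rewrite !big_ord_recr /= -IH exprS.
have h2 : (2 : R) != 0 by rewrite pnatr_eq0.
have -> : (k.*2.+1)%:R = 2 * (2^-1 + k%:R) :> R.
  by rewrite mulrDr mulfV // -natrM mul2n -addn1 natrD addrC.
ring.
Qed.

Unset Implicit Arguments.

Theorem mainTheorem1 (R : realFieldType) (n m : int) (k : nat)
  (hnm : `|m| <= n) (heven : (2 %| n - `|m|)%Z) :
  forall r : R, 0 <= r <= 1 ->
    `|((zernikeR R n m)^`(k)).[r]|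
      <= (\prod_(i < k) (n%:~R ^+ 2 - (i%:R : R) ^+ 2))
           / (2 ^+ k * pochhammer (2^-1 : R) k).
Proof.
move=> r /andP[r0 r1].
have hr : -1 <= r <= 1 by apply/andP; split; lra.
set N := absz n; set M := absz m.
have hm : `|m| = M%:Z by rewrite /M abszE.
have hn0 : 0 <= n by apply: le_trans hnm; exact: normr_ge0.
have hn : n = N%:Z by rewrite /N gez0_abs.
have hMN : (M <= N)%N by rewrite -lez_nat -hm -hn.
have habs : absz (n - (absz m)%:Z) = (N - M)%N.
  by rewrite hn /M subzn.
have hdiv : (2 %| N - M)%N by move: heven; rewrite dvdzE habs.
set p := ((N - M) %/ 2)%N.
have hN : N = (M + p.*2)%N by rewrite /p -muln2 divnK //; lia.
have hZ : zernikeR R n m = 'X ^+ M * (jacobi R 0 M p \Po (2%:P * 'X ^+ 2 - 1)).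
  by rewrite /zernikeR habs.
rewrite hZ.
apply: le_trans (bound_main k hN hr) _.
rewrite /Dk denom_eq hn le_eqVlt; apply/orP; left; apply/eqP.
congr (_ / _); apply: eq_bigr => i _; rewrite !natrM !expr2 //.
Qed.
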